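(* For any continuous function $f:\mathrm{SO}(3)\to\mathbb{R}^3$, there exists a rotation $R\in\mathrm{SO}(3)$ such that $d(R,\mathbf{R}_{xyz}(f(R)))=\pi$.
   Context: Unit quaternions $w+x\mathbf{i}+y\mathbf{j}+z\mathbf{k}$ are identified with $(w,x,y,z)\in S^3$. $\mathbf{R}_Q:S^3\to\mathrm{SO}(3)$ is the standard conversion $$\mathbf{R}_Q(w,x,y,z)=\begin{bmatrix}1-2y^2-2z^2 & 2(xy-zw) & 2(xz+yw)\\ 2(xy+zw) & 1-2x^2-2z^2 & 2(yz-xw)\\ 2(xz-yw) & 2(yz+xw) & 1-2x^2-2y^2\end{bmatrix}.$$ Extrinsic $x$-$y$-$z$ Euler angles: $\mathbf{Q}_{xyz}(\alpha,\beta,\gamma)=(\cos\frac{\gamma}{2}+\mathbf{k}\sin\frac{\gamma}{2})(\cos\frac{\beta}{2}+\mathbf{j}\sin\frac{\beta}{2})(\cos\frac{\alpha}{2}+\mathbf{i}\sin\frac{\alpha}{2})$ (quaternion product) and $\mathbf{R}_{xyz}(\alpha,\beta,\gamma)=\mathbf{R}_Q(\mathbf{Q}_{xyz}(\alpha,\beta,\gamma))$. For $R_1,R_2\in\mathrm{SO}(3)$, $d(R_1,R_2)=\cos^{-1}\frac{\mathrm{tr}(R_2R_1^{-1})-1}{2}$ is the angle of the rotation $R_2R_1^{-1}$. *)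

(* Defs.v *)
From HB Require Import structures.
From mathcomp Require Import all_boot all_order all_algebra.
From mathcomp Require Import all_classical all_reals all_analysis.
Set Implicit Arguments. Unset Strict Implicit. Unset Printing Implicit Defensive.
Import Order.TTheory GRing.Theory Num.Theory.
Import numFieldNormedType.Exports.
Local Open Scope ring_scope.
Local Open Scope classical_set_scope.

Section Defs.
Variable R : realType.

(* Unit quaternions w + x i + y j + z k as 4-tuples (w,x,y,z). *)
Definition quat := (R * R * R * R)%type.

Definition qmul (p q : quat) : quat :=
  let: (a1, b1, c1, d1) := p in
  let: (a2, b2, c2, d2) := q in
  (a1*a2 - b1*b2 - c1*c2 - d1*d2,
   a1*b2 + b1*a2 + c1*d2 - d1*c2,
   a1*c2 - b1*d2 + c1*a2 + d1*b2,
   a1*d2 + b1*c2 - c1*b2 + d1*a2).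

Definition mx3 (a b c d e f g h i : R) : 'M[R]_3 :=
  \matrix_(r < 3, s < 3)
    nth 0 (nth [::] [:: [:: a; b; c]; [:: d; e; f]; [:: g; h; i]] r) s.

Definition RQ (q : quat) : 'M[R]_3 :=
  let: (w, x, y, z) := q in
  mx3 (1 - 2*y^+2 - 2*z^+2) (2*(x*y - z*w))       (2*(x*z + y*w))
      (2*(x*y + z*w))       (1 - 2*x^+2 - 2*z^+2) (2*(y*z - x*w))
      (2*(x*z - y*w))       (2*(y*z + x*w))       (1 - 2*x^+2 - 2*y^+2).

(* Extrinsic x-y-z Euler angles. *)
Definition Qxyz (al be ga : R) : quat :=
  qmul (qmul (cos (ga/2), 0, 0, sin (ga/2))
             (cos (be/2), 0, sin (be/2), 0))
       (cos (al/2), sin (al/2), 0, 0).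

Definition Rxyz (al be ga : R) : 'M[R]_3 := RQ (Qxyz al be ga).

Definition SO3 : set 'M[R]_3 :=
  [set M | M^T *m M = 1%:M /\ \det M = 1].

Definition rotdist (R1 R2 : 'M[R]_3) : R :=
  acos ((\tr (R2 *m invmx R1) - 1) / 2).

End Defs.

(* Main.v *)
Require Import Defs.
From HB Require Import structures.
From mathcomp Require Import all_boot all_order all_algebra.
From mathcomp Require Import all_classical all_reals all_analysis.
From mathcomp Require Import ring lra.
Import Order.TTheory GRing.Theory Num.Theory.
Import numFieldNormedType.Exports.
Set Implicit Arguments. Unset Strict Implicit. Unset Printing Implicit Defensive.
Local Open Scope ring_scope.
Local Open Scope classical_set_scope.

Section Alg.
Variable R : realType.

Lemma det3 (a b c d e f g h i : R) : \det (mx3 a b c d e f g h i) =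
  a * (e * i - f * h) - b * (d * i - f * g) + c * (d * h - e * g).
Proof.
rewrite (expand_det_row _ ord0) !big_ord_recr big_ord0 /= /cofactor.
rewrite !(expand_det_row _ ord0) !big_ord_recr !big_ord0 /= /cofactor.
rewrite !det_mx11 !mxE /=.

ring.
Qed.

Lemma tr3 (a b c d e f g h i a' b' c' d' e' f' g' h' i' : R) :
  \tr (mx3 a b c d e f g h i *m (mx3 a' b' c' d' e' f' g' h' i')^T) =
  a*a' + b*b' + c*c' + d*d' + e*e' + f*f' + g*g' + h*h' + i*i'.
Proof.
rewrite /mxtrace !big_ord_recr big_ord0 /=.
rewrite !mxE !big_ord_recr !big_ord0 /= !mxE /=.
ring.
Qed.

Definition qn (q : quat R) : R := let: (w, x, y, z) := q in w^+2 + x^+2 + y^+2 + z^+2.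
Definition qdot (p q : quat R) : R :=
  let: (a1, b1, c1, d1) := p in let: (a2, b2, c2, d2) := q in
  a1*a2 + b1*b2 + c1*c2 + d1*d2.

Definition RQh (q : quat R) : 'M[R]_3 :=
  let: (w, x, y, z) := q in
  mx3 ((w^+2 + x^+2 + y^+2 + z^+2) - 2*y^+2 - 2*z^+2) (2*(x*y - z*w))       (2*(x*z + y*w))
      (2*(x*y + z*w))       ((w^+2 + x^+2 + y^+2 + z^+2) - 2*x^+2 - 2*z^+2) (2*(y*z - x*w))
      (2*(x*z - y*w))       (2*(y*z + x*w))       ((w^+2 + x^+2 + y^+2 + z^+2) - 2*x^+2 - 2*y^+2).

Lemma RQ_RQh q : qn q = 1 -> RQ q = RQh q.
Proof. by case: q => [[[w x] y] z] /= ->. Qed.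

Lemma trRQ q p : qn q = 1 -> qn p = 1 ->
  \tr (RQ q *m (RQ p)^T) = 4 * qdot q p ^+ 2 - 1.
Proof.
move=> Hq Hp; rewrite !RQ_RQh //.
transitivity (4 * qdot q p ^+ 2 - qn q * qn p); last by rewrite Hq Hp mulr1.
case: q {Hq} => [[[w x] y] z]; case: p {Hp} => [[[w' x'] y'] z'].
rewrite /= tr3; ring.
Qed.

Lemma RQh_orth p : (RQh p)^T *m RQh p = (qn p ^+ 2)%:M.
Proof.
case: p => [[[w x] y] z]; apply/matrixP => i j.
rewrite !mxE !big_ord_recr big_ord0 /= !mxE.
case: i => [[|[|[|i]]] Hi] //; case: j => [[|[|[|j]]] Hj] //=; ring.
Qed.

Lemma RQh_det p : \det (RQh p) = qn p ^+ 3.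
Proof. case: p => [[[w x] y] z]; rewrite /= det3; ring. Qed.

Lemma RQ_SO3 q : qn q = 1 -> SO3 (RQ q).
Proof.
move=> Hq; rewrite RQ_RQh //; split; first by rewrite RQh_orth Hq expr1n.
by rewrite RQh_det Hq expr1n.
Qed.

Lemma SO3_inv (M : 'M[R]_3) : SO3 M -> invmx M = M^T.
Proof.
case=> H _; have H' := mulmx1C H.
have [Mu _] := mulmx1_unit H'.
by rewrite -[RHS]mul1mx -(mulVmx Mu) -mulmxA H' mulmx1.
Qed.

Lemma qn_mul p q : qn (qmul p q) = qn p * qn q.
Proof.
case: q => [[[w x] y] z]; case: p => [[[w' x'] y'] z']; rewrite /=; ring.
Qed.

Lemma qn_Qxyz (a b c : R) : qn (Qxyz a b c) = 1.
Proof.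
rewrite /Qxyz !qn_mul /= !expr0n /= !addr0.
by rewrite !cos2Dsin2 !mulr1.
Qed.

Definition ct (g : R -> R) := continuous g.

Arguments ct : simpl never.

Lemma ct_ext (g h : R -> R) : (forall x, g x = h x) -> ct h -> ct g.
Proof. by move=> e; rewrite (_ : g = h) //; apply: funext. Qed.

Lemma ctD (g h : R -> R) : ct g -> ct h -> ct (fun x => g x + h x).
Proof. rewrite /ct => cg ch x; apply: cvgD; [exact: cg | exact: ch]. Qed.
Lemma ctM (g h : R -> R) : ct g -> ct h -> ct (fun x => g x * h x).
Proof. rewrite /ct => cg ch x; apply: cvgM; [exact: cg | exact: ch]. Qed.
Lemma ctN (g : R -> R) : ct g -> ct (fun x => - g x).
Proof. rewrite /ct => cg x; apply: cvgN; exact: cg. Qed.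
Lemma ctcst (c : R) : ct (fun _ => c).
Proof. rewrite /ct => x; apply: cvg_cst. Qed.
Lemma ctid : ct (fun x => x).
Proof. by move=> x. Qed.
Lemma ctX2 (g : R -> R) : ct g -> ct (fun x => g x ^+ 2).
Proof.
move=> cg; rewrite (_ : (fun x => g x ^+ 2) = fun x => g x * g x).
  exact: ctM.
by apply: funext => y; rewrite expr2.
Qed.
Lemma ctcos (g : R -> R) : ct g -> ct (fun x => cos (g x)).
Proof. move=> cg x; apply: (continuous_comp (cg x)); exact: continuous_cos. Qed.
Lemma ctsin (g : R -> R) : ct g -> ct (fun x => sin (g x)).
Proof. move=> cg x; apply: (continuous_comp (cg x)); exact: continuous_sin. Qed.

Ltac cont := first [ exact: ctcst | exact: ctid | assumption
  | apply: ctD; cont | apply: ctM; cont | apply: ctN; cont | apply: ctX2; cont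
  | apply: ctcos; cont | apply: ctsin; cont ].

Definition Mz (t : R) : 'M[R]_3 := RQ (cos (t/2), 0, 0, sin (t/2)).

Lemma Mz_SO3 t : SO3 (Mz t).
Proof. apply: RQ_SO3; by rewrite /= expr0n /= !addr0 cos2Dsin2. Qed.

Lemma Mz_entry_cont (i j : 'I_3) : ct (fun s => Mz s i j).
Proof.
apply: ct_ext => [s|]; first by rewrite /Mz /= /mx3 mxE.
case: i => [[|[|[|i]]] Hi] //; case: j => [[|[|[|j]]] Hj] //; rewrite /=; cont.
Qed.

Arguments Mz_entry_cont : clear implicits.

Lemma Mz_cont : continuous Mz.
Proof.
move=> t; apply/(@cvg_mx_entourageP R 3 3 _ _ (Mz t)) => A entA.
apply: filter_forall => i; apply: filter_forall => j.
have := (cvg_entourageP _ _).1 (Mz_entry_cont i j t) A entA.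
move=> H; near=> s; rewrite inE; near: s; exact: H.
Unshelve. all: by end_near.
Qed.

Lemma qn_p (t : R) : qn (cos (t/2), 0, 0, sin (t/2)) = 1.
Proof. by rewrite /= expr0n /= !addr0 cos2Dsin2. Qed.

Lemma fMz_cont (f : 'M[R]_3 -> 'rV[R]_3) : {within @SO3 R, continuous f} ->
  forall k, ct (fun t => f (Mz t) ord0 k).
Proof.
move=> hf k t.
have h1 := (subspace_continuousP (@SO3 R) f).1 hf _ (Mz_SO3 t).
have h2 : (f \o Mz) @ t --> f (Mz t).
  apply: cvg_trans h1 => W /= HW.
  have := Mz_cont HW.
  move=> H; rewrite nbhs_simpl /=; move: H; rewrite nbhs_simpl /=.
  apply: (@filterS _ _ (nbhs_filter t)) => s h; exact: h (Mz_SO3 s).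
exact: (continuous_comp h2 (@coord_continuous R 1 3 ord0 k (f (Mz t)))).
Qed.

Lemma Mz2pi : Mz (pi * 2) = Mz 0.
Proof.
rewrite /Mz mulfK ?pnatr_eq0 // mul0r cospi sinpi cos0 sin0 /RQ.
congr mx3; ring.
Qed.
End Alg.

Ltac cont := lazymatch goal with
  | |- ct (fun x => _ + _) => apply: ctD; cont
  | |- ct (fun x => _ * _) => apply: ctM; cont
  | |- ct (fun x => - _) => apply: ctN; cont
  | |- ct (fun x => _ ^+ 2) => apply: ctX2; cont
  | |- ct (fun x => cos _) => apply: ctcos; cont
  | |- ct (fun x => sin _) => apply: ctsin; cont
  | |- ct (fun x => x) => exact: ctid
  | |- _ => first [assumption | exact: ctcst]
  end.
Theorem corollary2 (R : realType) (f : 'M[R]_3 -> 'rV[R]_3) :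
  {within @SO3 R, continuous f} ->
  exists M : 'M[R]_3, @SO3 R M /\
    rotdist M (Rxyz (f M ord0 0) (f M ord0 1) (f M ord0 2)) = pi.
Proof.
move=> hf.
pose g t := Qxyz (f (Mz t) ord0 0) (f (Mz t) ord0 1) (f (Mz t) ord0 2).
pose phi t := qdot (g t) (cos (t/2), 0, 0, sin (t/2)).
have cphi : ct phi.
  have h0 : ct (fun t => f (Mz t) ord0 0) by exact: fMz_cont.
  have h1 : ct (fun t => f (Mz t) ord0 1) by exact: fMz_cont.
  have h2 : ct (fun t => f (Mz t) ord0 2) by exact: fMz_cont.
  apply: ct_ext => [t|]; first by rewrite /phi /g /Qxyz /=.
  cont.
have e2 : phi (pi * 2) = - phi 0.
  rewrite /phi /g Mz2pi mulfK ?pnatr_eq0 // mul0r cospi sinpi cos0 sin0.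
  case: (Qxyz _ _ _) => [[[a b] c] d] /=; ring.
have [c hc phic] : exists2 c, c \in `[0, pi * 2]%R & phi c = 0.
  apply: (@IVT R phi 0 (pi * 2) 0).
  - by apply: mulr_ge0; [exact: pi_ge0|].
  - exact: continuous_subspaceT.
  - rewrite e2; case: (ltP (phi 0) (- phi 0)) => h; apply/andP; split; lra.
exists (Mz c); split; first exact: Mz_SO3.
rewrite /rotdist SO3_inv; last exact: Mz_SO3.
rewrite /Rxyz /Mz trRQ ?qn_Qxyz ?qn_p //.
have -> : qdot (Qxyz (f (Mz c) ord0 0) (f (Mz c) ord0 1) (f (Mz c) ord0 2))
   (cos (c / 2), 0, 0, sin (c / 2)) = 0 by exact: phic.
have -> : (4 * 0 ^+ 2 - 1 - 1) / 2 = - 1 :> R by field.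
exact: acosN1.
Qed.
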